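(* Let $p\in(0,1)$ and let $(\lambda_n)_{n\ge1}$ be a sequence with $\lambda_1=1$ and $0<\lambda_n\le\lambda_{n-1}$ for all $n>1$. Let $r_1,r_2,\dots$ be $\{0,1\}$-valued random variables with $\Pr(r_1=1)=p$ and, for every $n\ge2$, $\Pr(r_n=1\mid r_1,\dots,r_{n-1})=\lambda_n p+(1-\lambda_n)\bar p_{n-1}$, where $\bar p_m=\frac1m\sum_{i=1}^m r_i$. Define $\hat r_1=r_1$ and $\hat r_i=\frac{r_i-(1-\lambda_i)\bar p_{i-1}}{\lambda_i}$ for $i\ge2$. Then for all $i>j\ge1$, \[\mathbb{E}[\hat r_i\mid\hat r_j]=\mathbb{E}[\hat r_i\mid\bar p_j]=p.\] *)

(* Defs.v *)
From HB Require Import structures.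
From mathcomp Require Import all_boot all_order all_algebra.
From mathcomp Require Import all_classical all_reals all_analysis.
Set Implicit Arguments. Unset Strict Implicit. Unset Printing Implicit Defensive.
Import Order.TTheory GRing.Theory Num.Theory.
Local Open Scope classical_set_scope.
Local Open Scope ring_scope.

(* Random variables are indexed 1,2,3,...; index 0 is unused. *)

Definition pbar {T} {R : realType} (r : nat -> T -> R) (m : nat) (t : T) : R :=
  (\sum_(1 <= k < m.+1) r k t) / m%:R.

Definition rhat {T} {R : realType} (lam : nat -> R) (r : nat -> T -> R)
  (i : nat) (t : T) : R :=
  if i == 1%N then r 1%N t
  else (r i t - (1 - lam i) * pbar r i.-1 t) / lam i.

(* atom of sigma(r_1,...,r_{n-1}) : the event {r_k = w_k for 1 <= k < n} *)
Definition prefix_event {T} {R : realType} (r : nat -> T -> R) (n : nat)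
  (w : nat -> bool) : set T :=
  [set t | forall k, (1 <= k < n)%N -> r k t = (w k)%:R].

(* E[Y | X] = c  (a.s.), i.e. Y is integrable and the constant c satisfies the
   defining property of the conditional expectation w.r.t. sigma(X):
   for every Borel B, E[Y 1_{X in B}] = c P(X in B). *)
Definition cond_exp_eq {d} {T : measurableType d} {R : realType}
  (P : probability T R) (Y X : T -> R) (c : R) : Prop :=
  P.-integrable setT (EFin \o Y) /\
  forall B : set R, measurable B ->
    (\int[P]_(t in X @^-1` B) (Y t)%:E = c%:E * P (X @^-1` B))%E.

(* Main.v *)
Require Import Defs.
From HB Require Import structures.
From mathcomp Require Import all_boot all_order all_algebra.
From mathcomp Require Import all_classical all_reals all_analysis.
From mathcomp Require Import measurable_realfun lebesgue_integral.
From mathcomp Require Import ring lra.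
Import Order.TTheory GRing.Theory Num.Theory.
Local Open Scope classical_set_scope.
Local Open Scope ring_scope.
Lemma prefix_meas (d : measure_display) (T : measurableType d) (R : realType)
  (r : nat -> T -> R) (n : nat) (w : nat -> bool) :
  (forall n, measurable_fun setT (r n)) -> measurable (prefix_event r n w).
Proof.
move=> mr.
have -> : prefix_event r n w = \bigcap_k (if (1 <= k < n)%N then
    r k @^-1` [set (w k)%:R] else setT).
  apply/seteqP; split => t /=.
    by move=> H k _; case: ifP => // /H.
  move=> H k Hk; have := H k I; by rewrite Hk.
apply: bigcapT_measurable => k; case: ifP => _ //.
by have := mr k measurableT _ (measurable_set1 ((w k)%:R)); rewrite setTI.
Qed.

Lemma pbar_meas (d : measure_display) (T : measurableType d) (R : realType)
  (r : nat -> T -> R) (m : nat) :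
  (forall n, measurable_fun setT (r n)) -> measurable_fun setT (pbar r m).
Proof.
move=> mr; rewrite /pbar.
apply: (@measurable_funM _ _ _ _ (fun t => \sum_(1 <= k < m.+1) r k t) (cst (m%:R^-1))).
  exact: measurable_sum.
exact: measurable_cst.
Qed.

Lemma rhat_meas {d : measure_display} {T : measurableType d} {R : realType}
  (lam : nat -> R) (r : nat -> T -> R) (i : nat) :
  (forall n, measurable_fun setT (r n)) -> measurable_fun setT (rhat lam r i).
Proof.
move=> mr; rewrite /rhat; case: (i == 1%N); first exact: mr.
apply: (@measurable_funM _ _ _ _ (fun t => r i t - (1 - lam i) * pbar r i.-1 t)
   (cst ((lam i)^-1))); last exact: measurable_cst.
apply: measurable_funB => //.
apply: (@measurable_funM _ _ _ _ (cst (1 - lam i)) (pbar r i.-1)).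
  exact: measurable_cst.
exact: pbar_meas.
Qed.

Lemma pbar_bound {T : Type} {R : realType} (r : nat -> T -> R) m t :
  (forall n t, r n t = 0 \/ r n t = 1) -> 0 <= pbar r m t <= 1.
Proof.
move=> r01; rewrite /pbar.
have s0 : 0 <= \sum_(1 <= k < m.+1) r k t.
  by apply: sumr_ge0 => k _; case: (r01 k t) => ->.
have sm : \sum_(1 <= k < m.+1) r k t <= m%:R.
  apply: (@le_trans _ _ (\sum_(1 <= k < m.+1) (1 : R))).
    by apply: ler_sum => k _; case: (r01 k t) => ->.
  by rewrite sumr_const_nat subn1 /=.
case: m sm s0 => [|m] sm s0; first by rewrite invr0 mulr0 lexx ler01.
rewrite divr_ge0 // ler_pdivrMr ?ltr0Sn // mul1r sm.
by [].
Qed.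

Lemma pbar_prefix (T : Type) (R : realType) (r : nat -> T -> R) m n t t' :
  (forall k, (1 <= k < n)%N -> r k t = r k t') -> (m < n)%N ->
  pbar r m t = pbar r m t'.
Proof.
move=> H mn; rewrite /pbar; congr (_ / _).
apply: eq_big_nat => k /andP[k1 km]; apply: H.
by rewrite k1 /=; apply: leq_trans km mn.
Qed.

Lemma rhat_prefix (T : Type) (R : realType) lam (r : nat -> T -> R) j n t t' :
  (forall k, (1 <= k < n)%N -> r k t = r k t') -> (1 <= j)%N -> (j < n)%N ->
  rhat lam r j t = rhat lam r j t'.
Proof.
move=> H j1 jn; rewrite /rhat; have [e|ne] := eqVneq j 1%N.
  by subst j; apply: H.
rewrite H ?j1 // (@pbar_prefix _ _ r _ n t t' H) //.
by apply: leq_ltn_trans jn; apply: leq_pred.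
Qed.
Lemma bnd_int (d : measure_display) (T : measurableType d) (R : realType)
  (P : probability T R) (D : set T) (f : T -> R) (M : R) :
  measurable D -> measurable_fun D f -> (forall t, `|f t| <= M) ->
  P.-integrable D (EFin \o f).
Proof.
move=> mD mf H.
apply: (@le_integrable _ _ _ P D mD _ (EFin \o cst M)).
- exact/measurable_EFinP.
- move=> t _ /=; rewrite lee_fin.
  exact: le_trans (H t) (ler_norm M).
- exact: finite_measure_integrable_cst.
Qed.

Definition emb {m : nat} (w : m.-tuple bool) : nat -> bool := fun k => nth false w k.-1.
Lemma gen_main (d : measure_display) (T : measurableType d) (R : realType)
  (P : probability T R) (p : R) (lam : nat -> R) (r : nat -> T -> R)
  (i : nat) (X : T -> R) :
  (1 < i)%N -> 0 < lam i ->
  (forall n, measurable_fun setT (r n)) ->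
  (forall n t, r n t = 0 \/ r n t = 1) ->
  (forall (w : nat -> bool),
     P (prefix_event r i w `&` [set t | r i t = 1]) =
     ((lam i * p + (1 - lam i) *
        ((\sum_(1 <= k < i) ((w k)%:R : R)) / i.-1%:R))%:E
      * P (prefix_event r i w))%E) ->
  measurable_fun setT X ->
  (forall t t', (forall k, (1 <= k < i)%N -> r k t = r k t') -> X t = X t') ->
  cond_exp_eq P (rhat lam r i) X p.
Proof.
move=> i1 lam0 mr r01 Hw mX HX.
have lamn0 : lam i != 0 by rewrite gt_eqF.
have mrh := rhat_meas lam r i mr.
split.
  apply: (@bnd_int _ _ _ P setT _ ((1 + `|1 - lam i|) / lam i)) => // t.
  rewrite /rhat (negbTE (_ : i != 1%N)); last by rewrite gtn_eqF.
  rewrite normrM normfV (gtr0_norm lam0) ler_pM2r ?invr_gt0 //.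
  apply: (le_trans (ler_normB _ _)); apply: lerD.
    by case: (r01 i t) => ->; rewrite ?normr0 ?normr1.
  rewrite normrM ler_piMr //.
  by have /andP[p0 p1] := pbar_bound r i.-1 t r01; rewrite ger0_norm.
move=> B mB.
set D := X @^-1` B.
have mD : measurable D by have := mX measurableT _ mB; rewrite setTI.
set m := i.-1.
have im : i = m.+1 by rewrite /m prednK // ltnW.
set s := enum {: m.-tuple bool}.
pose A (w : m.-tuple bool) := prefix_event r i (emb w).
have mA : forall w, measurable (A w) by move=> w; exact: prefix_meas.
pose F w := D `&` A w.
have mF : forall w, measurable (F w) by move=> w; exact: measurableI.
have HD : D = \big[setU/set0]_(w <- s) F w.
  rewrite -bigcup_seq; apply/seteqP; split => [t Dt|t [w _ [Dt _]]] //.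
  pose wt := mktuple (fun k : 'I_m => r k.+1 t == 1).
  exists wt; first by rewrite /= mem_enum.
  split => // k /andP[k1 ki].
  have hk : (k.-1 < m)%N by rewrite /m -ltnS !prednK // ltnW.
  have E : nth false wt k.-1 = (r k.-1.+1 t == 1).
    exact: (nth_mktuple _ false (Ordinal hk)).
  rewrite /emb E prednK //.
  by case: (r01 k t) => ->; rewrite ?eqxx // eq_sym oner_eq0.
have trF : trivIset [set` s] F.
  move=> w1 w2 _ _ [t [[_ A1] [_ A2]]].
  apply: eq_from_tnth => k; rewrite !(tnth_nth false).
  have hk : (1 <= k.+1 < i)%N by rewrite /= im ltnS ltn_ord.
  have := A1 _ hk; have := A2 _ hk; rewrite /emb /= => e2 e1.
  move: (etrans (esym e1) e2).
  case: (nth false w1 k); case: (nth false w2 k) => //= /eqP;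
    by rewrite ?oner_eq0 // eq_sym oner_eq0.
have key : forall f : T -> R, measurable_fun setT f ->
    (\int[P]_(x in D) (f x)%:E = \sum_(w <- s) \int[P]_(x in F w) (f x)%:E)%E.
  move=> f mf; rewrite {1}HD integral_bigsetU_EFin //.
    exact: enum_uniq.
  by apply/measurable_EFinP; apply: measurable_funS mf.
rewrite -(integral_cst P mD).
rewrite (_ : (\int[P]_(x in D) cst p%:E x = \int[P]_(x in D) (cst p x)%:E)%E) //.
rewrite !key //. idtac.
apply: eq_bigr => w _.
have [->|/set0P[t0 [Dt0 At0]]] := eqVneq (F w) set0.
  by rewrite !integral_set0.
have -> : F w = A w.
  apply/seteqP; split => [t []//|t At]; split => //.
  rewrite /D /preimage /=.
  rewrite (HX t t0) //.
  by move=> k hk; rewrite At ?At0.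
pose c := (1 - lam i) * ((\sum_(1 <= k < i) (((emb w) k)%:R : R)) / i.-1%:R).
have eqr : {in A w, forall t, ((rhat lam r i t)%:E =
    ((lam i)^-1)%:E * ((r i t)%:E - (cst c t)%:E))%E}.
  move=> t /set_mem At.
  rewrite /rhat (negbTE (_ : i != 1%N)); last by rewrite gtn_eqF.
  rewrite -EFinB -EFinM mulrC /c /pbar.
  congr (EFin (_ * _)); congr (_ - _ * (_ / _)).
  rewrite prednK; last exact: ltnW.
  by apply: eq_big_nat => k hk; rewrite At.
have irA : P.-integrable (A w) (EFin \o r i).
  apply: (@bnd_int _ _ _ P _ _ 1) => //.
    exact: measurable_funS (mr i).
  by move=> t; case: (r01 i t) => ->; rewrite ?normr0 ?normr1.
have icA : P.-integrable (A w) (EFin \o cst c).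
  exact: finite_measure_integrable_cst.
rewrite (eq_integral (fun t => ((lam i)^-1)%:E * ((r i t)%:E - (cst c t)%:E))%E); last exact: eqr.
rewrite integralZl //; last first.
  exact: (integrableB (mA w) irA icA).
rewrite integralB_EFin //.
have E1 : measurable [set t | r i t = 1].
  by have := mr i measurableT _ (measurable_set1 1); rewrite setTI.
rewrite (eq_integral (fun x => (\1_[set t | r i t = 1] x)%:E)); last first.
  move=> t _; rewrite indicE; case: (r01 i t) => e; rewrite e.
    rewrite memNset //= e => /eqP; by rewrite eq_sym oner_eq0.
  by rewrite mem_set.
rewrite integral_indic // setIC /A.
rewrite (integral_cst P (mA w) c%:E) (integral_cst P (mA w) p%:E).
apply: (@eq_trans _ _ (((lam i)^-1)%:E * ((lam i * p + c)%:E * P (A w) - c%:E * P (A w)))%E).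
  congr (_ * (_ - _))%E; first exact: Hw.
have fA : P (A w) \is a fin_num := fin_num_measure P _ (mA w).
rewrite -(fineK fA) -!EFinM.
apply: (@eq_trans _ _ ((p * fine (P (A w)))%:E)); last by rewrite EFinM fineK.
congr EFin.
by field.
Qed.

Theorem theoremA10 (d : measure_display) (T : measurableType d) (R : realType)
  (P : probability T R) (p : R) (lam : nat -> R) (r : nat -> T -> R) :
  0 < p < 1 ->
  lam 1%N = 1 ->
  (forall n, (1 < n)%N -> 0 < lam n <= lam n.-1) ->
  (forall n, measurable_fun setT (r n)) ->
  (forall n t, r n t = 0 \/ r n t = 1) ->
  P [set t | r 1%N t = 1] = p%:E ->
  (forall n (w : nat -> bool), (2 <= n)%N ->
     P (prefix_event r n w `&` [set t | r n t = 1]) =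
     ((lam n * p + (1 - lam n) *
        ((\sum_(1 <= k < n) ((w k)%:R : R)) / n.-1%:R))%:E
      * P (prefix_event r n w))%E) ->
  forall i j, (1 <= j)%N -> (j < i)%N ->
    cond_exp_eq P (rhat lam r i) (rhat lam r j) p /\
    cond_exp_eq P (rhat lam r i) (pbar r j) p.
Proof.
move=> _ _ Hlam mr r01 _ Hw i j j1 ji.
have i1 : (1 < i)%N by apply: leq_ltn_trans j1 ji.
have lam0 : 0 < lam i by have /andP[] := Hlam i i1.
have Hw' := fun w => Hw i w i1.
split.
  apply: gen_main => //; first exact: rhat_meas.
  by move=> t t' H; apply: rhat_prefix H j1 ji.
apply: gen_main => //; first exact: pbar_meas.
by move=> t t' H; apply: pbar_prefix H ji.
Qed.
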